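(* Let $n\geq1$. For all $a,r\in\mathbb N$ and all $l\in\mathbb N$ with $l\leq n$, $$\sum_{i=0}^l(-1)^i\binom{l}{i}\sum_{j=0}^{n-l+1}(-1)^{n-l+1+j}\binom{n-l+1}{j}\overline{(a+r+j,\,r+i+j)}=\bar0.$$
   Context: $\Lambda_{2,n}=\{\alpha\in\mathbb N^2:1\leq\alpha_1+\alpha_2\leq n\}$, $\lambda_{2,n}=|\Lambda_{2,n}|$, and for $v\in\mathbb N^2$, $\bar v=\big(\binom{v_1}{\alpha_1}\binom{v_2}{\alpha_2}\big)_{\alpha\in\Lambda_{2,n}}\in\mathbb C^{\lambda_{2,n}}$; $\bar0$ is the zero vector. *)

(* Defs.v *)
From HB Require Import structures.
From mathcomp Require Import all_boot all_order all_algebra algC.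
Set Implicit Arguments. Unset Strict Implicit. Unset Printing Implicit Defensive.
Import Order.TTheory GRing.Theory Num.Theory.
Local Open Scope ring_scope.

(* Lambda_{2,n} = { alpha in N^2 : 1 <= alpha_1 + alpha_2 <= n }, as a finite type
   (components are automatically <= n, so we take them in 'I_n.+1). *)
Definition Lambda2 (n : nat) :=
  {alpha : 'I_n.+1 * 'I_n.+1 | (1 <= alpha.1 + alpha.2 <= n)%N}.

Definition lambda2 (n : nat) : nat := #|{: Lambda2 n}|.

Definition vbar (n : nat) (v : nat * nat) : 'rV[algC]_(lambda2 n) :=
  \row_(k < lambda2 n)
     let alpha := val (@enum_val (Lambda2 n) predT k) in
     ('C(v.1, alpha.1) * 'C(v.2, alpha.2))%:R.

(* Main.v *)
Require Import Defs.
From HB Require Import structures.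
From mathcomp Require Import all_boot all_order all_algebra algC.
Import GRing.Theory Num.Theory.
Local Open Scope ring_scope.
From mathcomp Require Import zify.
Set Implicit Arguments. Unset Strict Implicit.
Import GRing.Theory Num.Theory.
Local Open Scope ring_scope.

Fixpoint deg_le (d : nat) (f : nat -> algC) : Prop :=
  match d with
  | 0 => forall j, f j = f 0%N
  | d'.+1 => deg_le d' (fun j => f j.+1 - f j)
  end.

Lemma deg_le_ext d f g : (forall j, f j = g j) -> deg_le d f -> deg_le d g.
Proof.
elim: d f g => [|d IH] f g E /=.
  by move=> H j; rewrite -!E.
apply: IH => j; by rewrite !E.
Qed.

Lemma deg_le_S d f : deg_le d f -> deg_le d.+1 f.
Proof.
elim: d f => [|d IH] f /=.
  move=> H j /=; rewrite (H j.+1) (H j) subrr. by rewrite (H 1%N) subrr.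
by move=> H; apply: IH.
Qed.

Lemma deg_le_mono d e f : (d <= e)%N -> deg_le d f -> deg_le e f.
Proof.
move=> /subnK <-; elim: (e - d)%N => // k IH H.
by rewrite addSn; apply: deg_le_S; apply: IH.
Qed.

Lemma deg_le_shift d f : deg_le d f -> deg_le d (fun j => f j.+1).
Proof.
elim: d f => [|d IH] f /=.
  by move=> H j; rewrite (H j.+1) (H 1%N).
by move=> H; apply: (IH (fun j => f j.+1 - f j)).
Qed.

Lemma deg_le_const d c f : deg_le d f -> deg_le d (fun j => c * f j).
Proof.
elim: d f => [|d IH] f /=.
  by move=> H j; rewrite (H j).
move=> H; apply: deg_le_ext (IH _ H) => j; by rewrite mulrBr.
Qed.

Lemma deg_le_add d f g : deg_le d f -> deg_le d g -> deg_le d (fun j => f j + g j).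
Proof.
elim: d f g => [|d IH] f g /=.
  by move=> Hf Hg j; rewrite (Hf j) (Hg j).
move=> Hf Hg; apply: deg_le_ext (IH _ _ Hf Hg) => j.
by rewrite opprD addrACA.
Qed.

Lemma deg_le_succ d f : deg_le d (fun j => f j.+1 - f j) -> deg_le d.+1 f.
Proof. by []. Qed.

Lemma deg_le_M a b f g : deg_le a f -> deg_le b g -> deg_le (a + b) (fun j => f j * g j).
Proof.
elim: a f g b => [|a IHa] f g b.
  move=> /= Hf Hg; apply: deg_le_ext (deg_le_const (f 0%N) Hg) => j.
  by rewrite (Hf j).
elim: b f g => [|b IHb] f g Hf Hg.
  rewrite addn0; apply: deg_le_ext (deg_le_const (g 0%N) Hf) => j.
  by rewrite (Hg j) mulrC.
rewrite addnS; apply: deg_le_succ.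
have H1 : deg_le (a.+1 + b) (fun j => f j.+1 * (g j.+1 - g j)).
  by apply: IHb => //; apply: deg_le_shift.
have H2 : deg_le (a + b.+1) (fun j => (f j.+1 - f j) * g j) by apply: IHa.
rewrite -addSnnS in H2.
apply: deg_le_ext (deg_le_add H1 H2) => j.
by rewrite mulrBr mulrBl addrA subrK.
Qed.

Lemma deg_le_bin p x : deg_le p (fun j => ('C(x + j, p))%:R).
Proof.
elim: p x => [|p IH] x /=.
  by move=> j; rewrite !bin0.
apply: deg_le_ext (IH x) => j.
by rewrite addnS binS natrD addrAC subrr add0r.
Qed.


Definition D m (g : nat -> algC) := \sum_(j < m.+1) ((-1) ^+ j * ('C(m, j))%:R) * g j.

Lemma D_B m f g : D m (fun j => f j - g j) = D m f - D m g.
Proof. by rewrite /D -sumrB; apply: eq_bigr => j _; rewrite mulrBr. Qed.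

Lemma D_rec m g : D m.+1 g = D m g - D m (fun j => g j.+1).
Proof.
rewrite /D big_ord_recl /=.
under eq_bigr => k _ do rewrite /bump /= binS natrD mulrDr mulrDl.
rewrite big_split /= addrA; congr (_ + _).
  rewrite [in RHS]big_ord_recl /= big_ord_recr /=.
  by rewrite (@bin_small m m.+1) //= mulr0 mul0r addr0 !bin0.
rewrite -sumrN; apply: eq_bigr => k _; by rewrite add1n exprS !mulN1r !mulNr.
Qed.

Lemma D_zero m d g : deg_le d g -> (d < m)%N -> D m g = 0.
Proof.
elim: m d g => [|m IH] d g // Hg Hd.
rewrite D_rec -opprB -D_B; apply/eqP; rewrite oppr_eq0; apply/eqP.
case: d Hg Hd => [|d] Hg Hd.
  rewrite /D big1 // => j _.
  by rewrite (Hg j.+1) (Hg j) subrr mulr0.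
exact: (IH d _ Hg).
Qed.
From mathcomp Require Import ring.
Theorem lemma2p12 (n : nat) : (1 <= n)%N ->
  forall a r l : nat, (l <= n)%N ->
  \sum_(i < l.+1)
     ((-1) ^+ i * ('C(l, i))%:R) *:
       \sum_(j < (n - l + 1).+1)
          ((-1) ^+ (n - l + 1 + j) * ('C(n - l + 1, j))%:R) *:
            vbar n (a + r + j, r + i + j)%N
  = 0 :> 'rV[algC]_(lambda2 n).
Proof.
move=> n1 a r l ln; apply/rowP => k; rewrite !mxE summxE.
under eq_bigr => i _ do rewrite mxE summxE.
under eq_bigr => i _ do under eq_bigr => j _ do rewrite mxE /vbar mxE.
set alpha := val (enum_val k).
have Hpq : (alpha.1 + alpha.2 <= n)%N by case/andP: (valP (enum_val k)).
move: alpha Hpq => [p q] /= Hpq.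
set m := (n - l + 1)%N.
move: (p : nat) (q : nat) Hpq => {}p {}q Hpq.
have E i j : ('C(a+r+j,p)*'C(r+i+j,q))%:R = \sum_(s<q.+1) 'C(i,s)%:R * ('C(a+r+j,p)%:R * 'C(r+j,q-s)%:R) :> algC.
  have V : 'C(r+i+j, q) = \sum_(s<q.+1) 'C(i,s)*'C(r+j,q-s).
    by rewrite binomial.Vandermonde addnCA addnA.
  rewrite V natrM natr_sum mulr_sumr.
  by apply: eq_bigr => s _; rewrite natrM mulrCA.
under eq_bigr => i _ do under eq_bigr => j _ do rewrite E mulr_sumr.
under eq_bigr => i _ do rewrite exchange_big mulr_sumr /=.
rewrite exchange_big /=; apply: big1 => s _.
transitivity (D l (fun i => ('C(i, s))%:R) * ((-1) ^+ m * D m (fun j => 'C(a+r+j,p)%:R * 'C(r+j,q-s)%:R))).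
  rewrite /D mulr_suml; apply: eq_bigr => i _.
  rewrite mulr_sumr mulr_sumr mulr_sumr; apply: eq_bigr => j _.
  rewrite exprD; ring.
case: (ltnP s l) => Hs.
  rewrite (@D_zero l s) ?mul0r //.
  by apply: deg_le_ext (deg_le_bin s 0) => i; rewrite add0n.
rewrite (@D_zero m (p + (q - s))) ?mulr0 //.
  exact: deg_le_M (deg_le_bin p (a + r)) (deg_le_bin (q - s) r).
have := ltn_ord s; rewrite /m; lia.
Qed.
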